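(* Let $r\ge 4$, $s\in\{2,\dots,r-1\}$, and let $A$ be an $s$-partition of $r$. Then the spectrum (with multiplicities) of the standard Laplacian of $\widehat K_r(A)$ consists of $$\frac{2r+1-\sqrt{4r+1}}{2r}\ \text{and}\ \frac{2r+1+\sqrt{4r+1}}{2r}\ \text{each with multiplicity } s-1,\qquad 1+\frac1r\ \text{with multiplicity } r-s+1,\qquad 0\ \text{with multiplicity }1,$$ and the spectrum of the signless standard Laplacian of $\widehat K_r(A)$ consists of $$\frac{2r-1-\sqrt{4r+1}}{2r}\ \text{and}\ \frac{2r-1+\sqrt{4r+1}}{2r}\ \text{each with multiplicity } s-1,\qquad 1-\frac1r\ \text{with multiplicity } r-s+1,\qquad 2\ \text{with multiplicity }1.$$ In particular these spectra depend only on $r$ and $s$.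
   Context: An $s$-partition of $r\in\mathbb N$ is a multiset $\{a_1,\dots,a_s\}$ of positive integers with $a_1+\dots+a_s=r$. $\widehat K_r$ is the graph obtained from the complete graph $K_r$ (vertices $w_1,\dots,w_r$) by attaching a pendant vertex $v_i$ to each $w_i$. For an $s$-partition $A$, $\widehat K_r(A)$ is obtained from $\widehat K_r$ by identifying the pendant vertices block-wise: $\{v_1,\dots,v_{a_1}\}$, $\{v_{a_1+1},\dots,v_{a_1+a_2}\}$, …, $\{v_{a_1+\dots+a_{s-1}+1},\dots,v_r\}$ each become one vertex, keeping all edges (so the $j$-th new vertex is adjacent to exactly the $a_j$ vertices $w_i$ of its block). The standard Laplacian is $(\Delta_G f)(v)=f(v)-\frac{1}{\deg v}\sum_{u\in N_v}f(u)$ and the signless one $(\Delta_{G^+}f)(v)=f(v)+\frac{1}{\deg v}\sum_{u\in N_v}f(u)$. *)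

(* Defs.v *)
From mathcomp Require Import all_boot all_order all_algebra.
Set Implicit Arguments. Unset Strict Implicit. Unset Printing Implicit Defensive.
Import Order.TTheory GRing.Theory Num.Theory.

(* An s-partition A of r is encoded as a sequence of positive naturals
   (a_1, ..., a_s) with sum r; block j (0-based) consists of the indices
   i (0-based) with a_1+...+a_j <= i < a_1+...+a_{j+1}. *)
Definition is_partition (r s : nat) (A : seq nat) : bool :=
  [&& size A == s, all (fun a => 0 < a) A & sumn A == r].

Definition inblock (A : seq nat) (i j : nat) : bool :=
  (sumn (take j A) <= i) && (i < sumn (take j.+1 A)).

(* Vertices of \hat K_r(A): 'I_(r + size A); vertex i < r is w_{i+1},
   vertex r + j is the j-th identified pendant vertex (block j). *)
Definition Khat_adj (r : nat) (A : seq nat) : rel 'I_(r + size A) :=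
  fun u v =>
    if (u < r) && (v < r) then u != v
    else if (u < r) && (r <= v) then inblock A u (v - r)
    else if (r <= u) && (v < r) then inblock A v (u - r)
    else false.

Definition gdeg (n : nat) (adj : rel 'I_n) (u : 'I_n) : nat :=
  #|[pred v | adj u v]|.

Local Open Scope ring_scope.

Definition std_lap (R : fieldType) (n : nat) (adj : rel 'I_n) : 'M[R]_n :=
  \matrix_(u, v) ((u == v)%:R - (adj u v)%:R / (gdeg adj u)%:R).

Definition signless_lap (R : fieldType) (n : nat) (adj : rel 'I_n) : 'M[R]_n :=
  \matrix_(u, v) ((u == v)%:R + (adj u v)%:R / (gdeg adj u)%:R).

(* Main.v *)
Require Import Defs.
From mathcomp Require Import all_boot all_order all_algebra.
From mathcomp Require Import ring lra zify.
Set Implicit Arguments. Unset Strict Implicit. Unset Printing Implicit Defensive.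
Import Order.TTheory GRing.Theory Num.Theory.

Lemma inblock_cons0 a A i : inblock (a :: A) i 0 = (i < a).
Proof. by rewrite /inblock /= take0 addn0. Qed.

Lemma inblock_consS a A i j :
  inblock (a :: A) i j.+1 = (a <= i) && inblock A (i - a) j.
Proof.
rewrite /inblock /=.
case: (leqP a i) => ai /=.
  by congr andb; apply/idP/idP; lia.
by apply/negbTE; apply/negP => /andP[]; lia.
Qed.

Lemma inblock_count A i :
  \sum_(j < size A) (inblock A i j : nat) = (i < sumn A).
Proof.
elim: A i => [|a A IH] i /=; first by rewrite big_ord0.
rewrite big_ord_recl /= inblock_cons0.
under eq_bigr => j _ do rewrite /bump leq0n add1n inblock_consS.
case: (leqP a i) => ai.
  rewrite add0n; under eq_bigr => j _ do rewrite andTb.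
  rewrite IH; congr nat_of_bool; apply/idP/idP; lia.
rewrite big1 => [|j _] //.
rewrite addn0; have -> : i < a + sumn A by lia.
done.
Qed.

Lemma sumn_take_mono A m n : m <= n -> sumn (take m A) <= sumn (take n A).
Proof.
elim: A m n => [|a A IH] [|m] [|n] //= mn; rewrite ?take0 /=.
all: try lia.
by rewrite leq_add2l IH.
Qed.

Lemma inblock_uniq A i j j' : inblock A i j -> inblock A i j' -> j = j'.
Proof.
wlog jj : j j' / j <= j'.
  move=> W H1 H2; case: (leqP j j') => h; first exact: W.
  by apply/esym; apply: W => //; apply: ltnW.
rewrite /inblock => /andP[_ h1] /andP[h2 _].
apply/eqP; rewrite eqn_leq jj /=; apply/negP => /negP; rewrite -ltnNge => lt.
have := sumn_take_mono A lt; lia.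
Qed.

Lemma sum_interval n a b : a <= b ->
  \sum_(k < n) ((a <= k) && (k < b) : nat) = minn b n - minn a n.
Proof.
move=> ab; elim: n => [|n IH]; first by rewrite big_ord0 !minn0.
rewrite big_ord_recr /= IH.
case: (leqP a n) => h1; case: (ltnP n b) => h2 /=; lia.
Qed.

Lemma inblock_card A j : j < size A ->
  \sum_(k < sumn A) (inblock A k j : nat) = nth 0 A j.
Proof.
move=> js; rewrite /inblock sum_interval; last exact: sumn_take_mono.
have h1 : sumn (take j.+1 A) <= sumn A.
  by rewrite -{2}(take_size A) sumn_take_mono.
have h0 : sumn (take j A) <= sumn (take j.+1 A) by apply: sumn_take_mono.
rewrite (minn_idPl h1) (minn_idPl (leq_trans h0 h1)).
by rewrite (take_nth 0 js) sumn_rcons addKn.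
Qed.

Lemma sum_nth A : \sum_(j < size A) nth 0 A j = sumn A.
Proof.
elim: A => [|a A IH]; first by rewrite big_ord0.
by rewrite /= big_ord_recl /= IH.
Qed.
Section Adj.
Variables (r : nat) (A : seq nat).
Local Notation s := (size A).

Lemma adj_ll (i k : 'I_r) : (@Khat_adj r A) (lshift s i) (lshift s k) = (i != k).
Proof. by rewrite /Khat_adj /= !ltn_ord /= (inj_eq (@lshift_inj _ _)). Qed.

Lemma adj_lr (i : 'I_r) (j : 'I_s) : (@Khat_adj r A) (lshift s i) (rshift r j) = inblock A i j.
Proof.
have h1 : (r + j < r) = false by lia.
have h2 : r <= r + j by lia.
by rewrite /Khat_adj /= ltn_ord h1 h2 /= addKn.
Qed.

Lemma adj_rl (i : 'I_r) (j : 'I_s) : (@Khat_adj r A) (rshift r j) (lshift s i) = inblock A i j.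
Proof.
have h1 : (r + j < r) = false by lia.
have h2 : r <= r + j by lia.
by rewrite /Khat_adj /= ltn_ord h1 h2 /= addKn.
Qed.

Lemma adj_rr (j j' : 'I_s) : (@Khat_adj r A) (rshift r j) (rshift r j') = false.
Proof. have h1 : (r + j' < r) = false by lia. have h2 : (r + j < r) = false by lia. by rewrite /Khat_adj /= h1 h2 /= andbF. Qed.

Lemma card_sum n (P : pred 'I_n) : #|[pred v | P v]| = \sum_(v < n) (P v : nat).
Proof. by rewrite -sum1_card big_mkcond /=; apply: eq_bigr => v _; rewrite inE; case: (P v). Qed.

Hypothesis hr : sumn A = r.

Lemma deg_l (i : 'I_r) : gdeg ((@Khat_adj r A)) (lshift s i) = r.
Proof.
rewrite /gdeg card_sum big_split_ord /=.
under eq_bigr => k _ do rewrite adj_ll.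
under [X in _ + X]eq_bigr => j _ do rewrite adj_lr.
rewrite inblock_count hr ltn_ord.
rewrite (bigD1 i) //= eqxx add0n.
rewrite (eq_bigr (fun _ => 1)) => [|k]; last by rewrite eq_sym => ->.
by rewrite sum1_card cardC1 card_ord addn1 prednK // (leq_ltn_trans (leq0n _) (ltn_ord i)).
Qed.

Lemma deg_r (j : 'I_s) : gdeg ((@Khat_adj r A)) (rshift r j) = nth 0 A j.
Proof.
rewrite /gdeg card_sum big_split_ord /=.
under eq_bigr => k _ do rewrite adj_rl.
under [X in _ + X]eq_bigr => j' _ do rewrite adj_rr.
rewrite [X in _ + X]big1 // addn0.
have := inblock_card (ltn_ord j); rewrite hr => ->.
done.
Qed.
End Adj.

Local Open Scope ring_scope.
Lemma char_poly_eval (R : comNzRingType) n (M : 'M[R]_n) x :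
  (char_poly M).[x] = \det (x%:M - M).
Proof.
rewrite /char_poly -[_.[x]]/(horner_eval x _) -det_map_mx; congr (\det _).
apply/matrixP => i j; rewrite !mxE /= horner_evalE !hornerE.
by case: (i == j); rewrite /= ?mulr1n ?mulr0n ?hornerE.
Qed.

Lemma sylvester (R : comNzRingType) m n (A : 'M[R]_(m, n)) (B : 'M[R]_(n, m)) :
  \det (1%:M + A *m B) = \det (1%:M + B *m A).
Proof.
have e1 : block_mx 1%:M A (- B) 1%:M =
   block_mx 1%:M 0 (- B) 1%:M *m block_mx 1%:M A 0 (1%:M + B *m A).
  rewrite mulmx_block ?mul1mx ?mulmx1 ?mul0mx ?mulmx0 ?addr0 ?add0r.
  by rewrite mulNmx addrCA addNr addr0.
have e2 : block_mx 1%:M A (- B) 1%:M =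
   block_mx 1%:M A 0 1%:M *m block_mx (1%:M + A *m B) 0 (- B) 1%:M.
  rewrite mulmx_block ?mul1mx ?mulmx1 ?mul0mx ?mulmx0 ?addr0 ?add0r.
  by rewrite mulmxN addrK.
have := congr1 (@determinant _ _) e1; rewrite e2 !det_mulmx det_lblock det_ublock.
by rewrite det_lblock det_ublock !det1 !mul1r mulr1 => ->.
Qed.

Lemma schur_scalar (R : fieldType) m n (P : 'M[R]_m) (Q : 'M[R]_(m, n))
  (S : 'M[R]_(n, m)) (d : R) : d != 0 ->
  \det (block_mx P Q S d%:M) = d ^+ n * \det (P - d^-1 *: (Q *m S)).
Proof.
move=> d0.
have -> : block_mx P Q S d%:M =
  block_mx 1%:M (d^-1 *: Q) 0 1%:M *m block_mx (P - d^-1 *: (Q *m S)) 0 S d%:M.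
  rewrite mulmx_block ?mul1mx ?mulmx1 ?mul0mx ?mulmx0 ?addr0 ?add0r.
  rewrite -scalemxAl subrK -scalemxAl mul_mx_scalar scalerA mulVf //.
  by rewrite scale1r.
  by rewrite det_mulmx det_ublock det_lblock !det_scalar !expr1n !mul1r mulrC.
Qed.

Lemma det_scalar_plus (R : fieldType) m n (A : 'M[R]_(m, n)) (B : 'M[R]_(n, m)) c :
  c != 0 -> \det (c%:M + A *m B) = c ^+ m * \det (1%:M + c^-1 *: (B *m A)).
Proof.
move=> c0.
have -> : c%:M + A *m B = c *: (1%:M + A *m (c^-1 *: B)).
  by rewrite scalerDr scalemx1 -scalemxAr scalerA divff // scale1r.
by rewrite detZ sylvester scalemxAl.
Qed.

Lemma poly_eq_ge3 (R : realFieldType) (p q : {poly R}) :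
  (forall x : R, 3 <= x -> p.[x] = q.[x]) -> p = q.
Proof.
move=> H; apply/eqP; rewrite -subr_eq0; apply/eqP.
pose rs := [seq (i + 3)%:R : R | i <- iota 0 (size (p - q))].
apply: (@roots_geq_poly_eq0 _ _ rs).
- apply/allP => y /mapP [i _ ->]; rewrite /root hornerD hornerN H ?subrr //.
  by rewrite natrD lerDr ler0n.
- rewrite map_inj_uniq ?iota_uniq // => i j /eqP; rewrite eqr_nat => /eqP; lia.
- by rewrite size_map size_iota.
Qed.

Lemma key (R : realFieldType) (r : nat) (A : seq nat) (t x : R) :
  sumn A = r -> all (fun a => 0 < a)%N A -> (1 <= r)%N -> (t = 1 \/ t = -1) -> 3 <= x ->
  let c := x - 1 - t / r%:R in let d := x - 1 in let e := 1 - (c * d * r%:R)^-1 in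
  \det (x%:M - (\matrix_(u, v) ((u == v)%:R - t * (@Khat_adj r A u v)%:R
        / (gdeg (@Khat_adj r A) u)%:R) : 'M[R]_(r + size A)))
  = d ^+ size A * (c ^+ r * (e ^+ size A * (1 + e^-1 * (t / c)))).
Proof.
move=> hr hpos r1 ht x3 c d e.
set s := size A.
have r0 : (r%:R : R) != 0 by rewrite pnatr_eq0 -lt0n.
have rge1 : 1 <= (r%:R : R) by rewrite ler1n.
have tt : t * t = 1 by case: ht => ->; rewrite ?mulr1 ?mulrNN ?mulr1.
have c1 : 1 <= c.
  have : 0 < (r%:R : R)^-1 <= 1.
    by rewrite invr_gt0 (lt_le_trans ltr01 rge1) /= invf_le1 // (lt_le_trans ltr01 rge1).
  by rewrite /c /d; case: ht => -> /andP[h1 h2]; rewrite ?mul1r ?mulN1r; lra.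
have d2 : 2 <= d by rewrite /d; lra.
have t0 : t != 0 by case: ht => ->; rewrite ?oppr_eq0 oner_eq0.
have c0 : c != 0 by rewrite gt_eqF // (lt_le_trans ltr01 c1).
have d0 : d != 0 by rewrite gt_eqF // (lt_le_trans _ d2).
have cdr2 : 2 <= c * d * r%:R.
  have h : 2 <= c * d by nra.
  by nra.
have e0 : e != 0.
  rewrite /e subr_eq0 eq_sym invr_eq1; apply/negP => /eqP h; rewrite h in cdr2; clear -cdr2; lra.
have aj0 : forall j : 'I_s, ((nth 0 A j)%:R : R) != 0.
  move=> j; rewrite pnatr_eq0 -lt0n; exact: (allP hpos _ (mem_nth 0 (ltn_ord j))).
have cnt : forall i : 'I_r, \sum_(j < s) ((inblock A i j)%:R : R) = 1.
  by move=> i; rewrite -natr_sum inblock_count hr ltn_ord.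
have card : forall j : 'I_s, \sum_(k < r) ((inblock A k j)%:R : R) = (nth 0 A j)%:R.
  move=> j; rewrite -natr_sum; congr (_%:R).
  by move: (inblock_card (ltn_ord j)); rewrite hr.
pose b (i j : nat) : R := (inblock A i j)%:R.
pose P : 'M[R]_r := \matrix_(i, k) (c * (i == k)%:R + t / r%:R).
pose Q : 'M[R]_(r, s) := \matrix_(i, j) (t * b i j / r%:R).
pose S : 'M[R]_(s, r) := \matrix_(j, k) (t * b k j / (nth 0 A j)%:R).
set M := (x%:M - _).
have HM : M = block_mx P Q S d%:M.
  rewrite -[M]submxK; congr block_mx; apply/matrixP => i k; rewrite !mxE.
  - rewrite (inj_eq (@lshift_inj _ _)) adj_ll deg_l //.
    by case: (i == k) => /=; rewrite /c; ring.
  - rewrite adj_lr deg_l //.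
    have -> : (lshift s i == rshift r k) = false.
      by apply/negbTE; rewrite eq_lrshift.
    by rewrite /b /=; ring.
  - rewrite adj_rl deg_r //.
    have -> : (rshift r i == lshift s k) = false.
      by apply/negbTE; rewrite eq_rlshift.
    by rewrite /b /=; ring.
  - rewrite adj_rr (inj_eq (@rshift_inj _ _)).
    by case: (i == k) => /=; rewrite /d; ring.
rewrite HM schur_scalar //.
pose E' : 'M[R]_(r, s) := \matrix_(i, j) b i j.
pose K : 'M[R]_(s, r) :=
  \matrix_(j, k) (t / r%:R - b k j / (d * r%:R * (nth 0 A j)%:R)).
have H2 : P - d^-1 *: (Q *m S) = c%:M + E' *m K.
  apply/matrixP => i k; rewrite !mxE.
  under eq_bigr do rewrite !mxE.
  under [X in _ = _ + X]eq_bigr do rewrite !mxE mulrBr.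
  rewrite sumrB -mulr_suml cnt big_distrr /=.
  have -> : \sum_(j < s) d^-1 * (t * b i j / r%:R * (t * b k j / (nth 0 A j)%:R))
     = \sum_(j < s) b i j * (b k j / (d * r%:R * (nth 0 A j)%:R)).
    apply: eq_bigr => j _; rewrite -[RHS]mul1r -tt; field.
    by rewrite (aj0 j) t0 r0 d0.
  rewrite mulr_natr; ring.
rewrite H2 det_scalar_plus //.
have pair : forall j j' : 'I_s,
    \sum_(k < r) b k j * b k j' = (j == j')%:R * (nth 0 A j)%:R.
  move=> j j'; case: (eqVneq j j') => [<-|ne].
    rewrite mul1r -card; apply: eq_bigr => k _.
    by rewrite /b -natrM mulnb andbb.
  rewrite mul0r big1 // => k _; rewrite /b.
  case bk : (inblock A k j); case bk' : (inblock A k j'); rewrite ?mulr0 ?mul0r //.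
  by exfalso; move/eqP: ne; apply; apply: val_inj; exact: inblock_uniq bk bk'.
pose u : 'M[R]_(s, 1) := const_mx 1.
pose v : 'M[R]_(1, s) := \matrix_(l, j) (t * (nth 0 A j)%:R / (r%:R * c)).
have H3 : 1%:M + c^-1 *: (K *m E') = e%:M + u *m v.
  apply/matrixP => j j'; rewrite !mxE.
  under eq_bigr do rewrite !mxE mulrBl mulrAC.
  under [X in _ = _ + X]eq_bigr do rewrite !mxE.
  rewrite sumrB.
  under [X in _ * (_ - X)]eq_bigr do rewrite mulrAC.
  have cardb : forall j : 'I_s, \sum_(k < r) b k j = (nth 0 A j)%:R := card.
  rewrite -!mulr_suml -mulr_sumr cardb pair big_ord1.
  case: (eqVneq j j') => [<-|ne]; rewrite /= ?mulr1n ?mulr0n /e.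
    by field; rewrite (aj0 j) c0 d0 r0.
  by field; rewrite (aj0 j) c0 r0 d0.
rewrite H3 det_scalar_plus // det_mx11 !mxE.
under eq_bigr do rewrite !mxE mulr1.
rewrite -mulr_suml -mulr_sumr -natr_sum sum_nth hr /=.
by congr (_ * (_ * (_ * (_ + _ * _)))); field; rewrite c0 r0.
Qed.
Lemma alg (R : rcfType) (r s : nat) (t x : R) :
  (t = 1 \/ t = -1) -> (1 <= s)%N -> (s <= r)%N ->
  let c := x - 1 - t / r%:R in let d := x - 1 in let e := 1 - (c * d * r%:R)^-1 in
  c != 0 -> d != 0 -> e != 0 -> (r%:R : R) != 0 ->
  d ^+ s * (c ^+ r * (e ^+ s * (1 + e^-1 * (t / c)))) =
  (x - (2 * r%:R + t - Num.sqrt (4 * r%:R + 1)) / (2 * r%:R)) ^+ (s - 1) *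
  (x - (2 * r%:R + t + Num.sqrt (4 * r%:R + 1)) / (2 * r%:R)) ^+ (s - 1) *
  c ^+ (r - s + 1) * (x - 1 + t).
Proof.
move=> ht s1 sr c d e c0 d0 e0 r0.
have tt : t * t = 1 by case: ht => ->; rewrite ?mulr1 ?mulrNN ?mulr1.
set sq := Num.sqrt _.
have sq2 : sq * sq = 4 * r%:R + 1.
  rewrite -expr2 sqr_sqrtr // addr_ge0 ?mulr_ge0 ?ler0n //.
have hq : (x - (2 * r%:R + t - sq) / (2 * r%:R)) * (x - (2 * r%:R + t + sq) / (2 * r%:R))
    = (c * d * r%:R - 1) / r%:R.
  have -> : (x - (2 * r%:R + t - sq) / (2 * r%:R)) * (x - (2 * r%:R + t + sq) / (2 * r%:R))
     = ((2 * r%:R * (x - 1) - t) * (2 * r%:R * (x - 1) - t) - sq * sq) / (4 * r%:R * r%:R).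
    by field.
  by rewrite sq2 /c /d; case: ht => ->; field.
have cdr0 : c * d * r%:R != 0 by rewrite !mulf_neq0.
have he : e = (c * d * r%:R - 1) / (c * d * r%:R) .
 by rewrite /e; field; rewrite r0 d0 c0.
case: s s1 sr => [//|k] _ kr.
rewrite (_ : (k.+1 - 1 = k)%N); last lia.
rewrite -exprMn hq.
have -> : (r - k.+1 + 1 = r - k)%N by lia.
rewrite -{1}(subnK (ltnW kr)) exprD !exprS he.
rewrite !expr_div_n !exprMn.
set ck := c ^+ k; set dk := d ^+ k; set rk := (r%:R : R) ^+ k.
set q := c * d * r%:R - 1; set crk := c ^+ (r - k).
have ck0 : ck != 0 by rewrite expf_neq0.
have dk0 : dk != 0 by rewrite expf_neq0.
have rk0 : rk != 0 by rewrite expf_neq0.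
have q0 : q != 0.
  by move: e0; rewrite he mulf_eq0 negb_or => /andP[].
have hq' : q + t * d * r%:R = r%:R * c * (d + t).
  by rewrite /q /c /d; case: ht => ->; field.
rewrite -[1 + _](_ : (q + t * d * r%:R) / q = _); last first.
  by field; rewrite q0 c0 d0 r0.
rewrite hq' (_ : x - 1 + t = d + t) //.
have qk0 : q ^+ k != 0 by rewrite expf_neq0.
field.
by rewrite q0 rk0 ck0 dk0 c0 d0 r0.
Qed.

Lemma nz (R : realFieldType) (r : nat) (t x : R) :
  (1 <= r)%N -> (t = 1 \/ t = -1) -> 3 <= x ->
  let c := x - 1 - t / r%:R in let d := x - 1 in let e := 1 - (c * d * r%:R)^-1 in
  [/\ c != 0, d != 0 & e != 0].
Proof.
move=> r1 ht x3 c d e.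
have rge1 : 1 <= (r%:R : R) by rewrite ler1n.
have c1 : 1 <= c.
  have : 0 < (r%:R : R)^-1 <= 1.
    by rewrite invr_gt0 (lt_le_trans ltr01 rge1) /= invf_le1 // (lt_le_trans ltr01 rge1).
  by rewrite /c /d; case: ht => -> /andP[h1 h2]; rewrite ?mul1r ?mulN1r; lra.
have d2 : 2 <= d by rewrite /d; lra.
have c0 : c != 0 by rewrite gt_eqF // (lt_le_trans ltr01 c1).
have d0 : d != 0 by rewrite gt_eqF // (lt_le_trans _ d2).
have cdr2 : 2 <= c * d * r%:R.
  have h : 2 <= c * d by nra.
  by nra.
split => //.
rewrite /e subr_eq0 eq_sym invr_eq1; apply/negP => /eqP h.
rewrite h in cdr2; clear -cdr2; lra.
Qed.

Theorem mainTheorem6 (R : rcfType) (r s : nat) (A : seq nat) :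
  (4 <= r)%N -> (2 <= s)%N -> (s <= r - 1)%N -> is_partition r s A ->
  char_poly (@std_lap R _ (@Khat_adj r A)) =
    ('X - ((2 * r%:R + 1 - Num.sqrt (4 * r%:R + 1)) / (2 * r%:R))%:P) ^+ (s - 1)
    * ('X - ((2 * r%:R + 1 + Num.sqrt (4 * r%:R + 1)) / (2 * r%:R))%:P) ^+ (s - 1)
    * ('X - (1 + r%:R^-1)%:P) ^+ (r - s + 1)
    * 'X
  /\
  char_poly (@signless_lap R _ (@Khat_adj r A)) =
    ('X - ((2 * r%:R - 1 - Num.sqrt (4 * r%:R + 1)) / (2 * r%:R))%:P) ^+ (s - 1)
    * ('X - ((2 * r%:R - 1 + Num.sqrt (4 * r%:R + 1)) / (2 * r%:R))%:P) ^+ (s - 1)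
    * ('X - (1 - r%:R^-1)%:P) ^+ (r - s + 1)
    * ('X - 2%:P).
Proof.
move=> r4 s2 sr /and3P[/eqP hs hpos /eqP hr]; subst s.
have r1 : (1 <= r)%N by lia.
have r0 : (r%:R : R) != 0 by rewrite pnatr_eq0 -lt0n.
have s1 : (1 <= size A)%N by lia.
have sr' : (size A <= r)%N by lia.
split; apply: poly_eq_ge3 => x x3; rewrite char_poly_eval.
- have -> : std_lap R (@Khat_adj r A) = \matrix_(u, v) ((u == v)%:R - 1 *
     (@Khat_adj r A u v)%:R / (gdeg (@Khat_adj r A) u)%:R).
    by apply/matrixP => u v; rewrite !mxE mul1r.
  have ht : (1 : R) = 1 \/ (1 : R) = -1 by left.
  have [c0 d0 e0] := nz r1 ht x3.
  rewrite key // alg //.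
  rewrite !hornerE.
  by congr (_ * _ * (_ ^+ _) * _); ring.
- have -> : signless_lap R (@Khat_adj r A) = \matrix_(u, v) ((u == v)%:R - (-1) *
     (@Khat_adj r A u v)%:R / (gdeg (@Khat_adj r A) u)%:R).
    by apply/matrixP => u v; rewrite !mxE; ring.
  have ht : (-1 : R) = 1 \/ (-1 : R) = -1 by right.
  have [c0 d0 e0] := nz r1 ht x3.
  rewrite key // alg //.
  rewrite !hornerE.
  by congr (_ * _ * (_ ^+ _) * _); ring.
Qed.
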